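(* Let $S$ be a nonempty set of graphs on $\Pi$, $A$ the closed-above model generated by $S$, and $r>0$. Then $\mathrm{eqdom}(S^r)$-set agreement is solvable in $r$ rounds on $A$.
   Context: Fix $\Pi=\{p_1,\dots,p_n\}$. A graph is a directed graph on $\Pi$ containing all self-loops; $Out_G(p)=\{q:(p,q)\in E(G)\}$, $In_G(p)=\{q:(q,p)\in E(G)\}$, $Out_G(P)=\bigcup_{p\in P}Out_G(p)$. Computation proceeds in failure-free, communication-closed rounds: in round $r$ a graph $G_r$ is chosen and each $p$ receives the round-$r$ messages of the processes in $In_{G_r}(p)$. $\uparrow G=\{H:E(H)\supseteq E(G)\}$; the closed-above model generated by $S$ allows exactly the executions whose round graphs each lie in $\bigcup_{G\in S}\uparrow G$. In $k$-set agreement each process starts with an input from a totally ordered set $V_{in}$ and must decide a value so that every decided value is some process's input and at most $k$ distinct values are decided; it is solvable in $r$ rounds if some algorithm guarantees this, with all processes deciding after $r$ rounds, in every allowed execution and input assignment. $\mathrm{eqdom}(G)=\min\{i\in[1,n]:\forall P\subseteq\Pi,\ |P|=i\Rightarrow Out_G(P)=\Pi\}$ and $\mathrm{eqdom}(S)=\max_{G\in S}\mathrm{eqdom}(G)$. The graph path product $G\otimes H$ has edge set $\{(u,v):\exists w,\ (u,w)\in E(G)\wedge(w,v)\in E(H)\}$, and $S^r=\{G_1\otimes\cdots\otimes G_r: G_1,\dots,G_r\in S\}$. *)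

(* Defs.v *)
From HB Require Import structures.
From mathcomp Require Import all_boot all_order.
Set Implicit Arguments. Unset Strict Implicit. Unset Printing Implicit Defensive.

(* Processes Pi = 'I_n.  A (candidate) graph is a set of directed edges. *)
Definition graph (n : nat) := {set 'I_n * 'I_n}.

Definition is_graph n (G : graph n) : Prop := forall p : 'I_n, (p, p) \in G.

Definition Out n (G : graph n) (p : 'I_n) : {set 'I_n} := [set q | (p, q) \in G].
Definition In_ n (G : graph n) (p : 'I_n) : {set 'I_n} := [set q | (q, p) \in G].
Definition OutS n (G : graph n) (P : {set 'I_n}) : {set 'I_n} :=
  \bigcup_(p in P) Out G p.

Definition dominating n (G : graph n) (i : nat) : bool :=
  [forall P : {set 'I_n}, (#|P| == i) ==> (OutS G P == setT)].

(* eqdom(G) = min { i in [1,n] | dominating G i }  (default n, which always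
   dominates when G contains all self-loops) *)
Definition eqdom n (G : graph n) : nat :=
  \big[minn/n]_(1 <= i < n.+1 | dominating G i) i.

Definition eqdomS n (S : {set graph n}) : nat := \max_(G in S) eqdom G.

Definition gprod n (G H : graph n) : graph n :=
  [set uv | [exists w, ((uv.1, w) \in G) && ((w, uv.2) \in H)]].

Definition idgraph n : graph n := [set uv | uv.1 == uv.2].

Fixpoint gpow n (S : {set graph n}) (r : nat) : {set graph n} :=
  match r with
  | 0 => [set idgraph n]
  | r'.+1 => [set gprod G H | G in gpow S r', H in S]
  end.

(* closed-above model generated by S: round graph of round t (t >= 1)
   is Gs t, which must lie above some graph of S *)
Definition allowed n (S : {set graph n}) (Gs : nat -> graph n) : Prop :=
  forall t, 0 < t -> exists2 G, G \in S & G \subset Gs t.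

Record algorithm (n : nat) (V : Type) := Alg {
  St : Type;
  Msg : Type;
  init : 'I_n -> V -> St;
  send : nat -> 'I_n -> 'I_n -> St -> Msg;      (* round, sender, receiver *)
  step : nat -> 'I_n -> St -> ('I_n -> option Msg) -> St;
                                                (* round, process, state, received *)
  decide : 'I_n -> St -> V
}.

Fixpoint run n V (A : algorithm n V) (x : 'I_n -> V) (Gs : nat -> graph n)
    (t : nat) : 'I_n -> @St _ _ A :=
  match t with
  | 0 => fun p => @init _ _ A p (x p)
  | t'.+1 =>
      let s := run A x Gs t' in
      fun p => @step _ _ A t'.+1 p (s p)
        (fun q => if q \in In_ (Gs t'.+1) p then Some (@send _ _ A t'.+1 q p (s q))
                  else None)
  end.

Definition decision n V (A : algorithm n V) x Gs r (p : 'I_n) : V :=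
  @decide _ _ A p (run A x Gs r p).

Definition kset_solvable (d : Order.disp_t) (V : orderType d) n
    (S : {set graph n}) (k r : nat) : Prop :=
  exists A : algorithm n V,
    forall (Gs : nat -> graph n), allowed S Gs ->
    forall x : 'I_n -> V,
      (forall p, exists q, decision A x Gs r p = x q) /\
      size (undup [seq decision A x Gs r p | p <- enum 'I_n]) <= k.

(* Main.v *)
Require Import Defs.
From HB Require Import structures.
From mathcomp Require Import all_boot all_order.
Import Order.TTheory.

Section Proof.
Variables (n : nat) (d : Order.disp_t) (V : orderType d).

Definition mergeq (s : 'I_n -> option V) (recv : 'I_n -> option ('I_n -> option V))
  (q : 'I_n) : option V :=
  foldr (fun w acc => if acc is Some _ then acc else obind (fun m => m q) (recv w))
    (s q) (enum 'I_n).

Definition decf (s : V * ('I_n -> option V)) : V :=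
  foldr (fun q acc => if s.2 q is Some v then Order.min v acc else acc) s.1 (enum 'I_n).

Definition floodA : algorithm n V :=
  @Alg n V (V * ('I_n -> option V))%type ('I_n -> option V)
    (fun p v => (v, fun q => if q == p then Some v else None))
    (fun _ _ _ s => s.2)
    (fun _ _ s recv => (s.1, mergeq s.2 recv))
    (fun _ s => decf s).

Lemma foldr_some (b : option V) (f : 'I_n -> option V) (l : seq 'I_n) (P : V -> Prop) :
  (forall u, b = Some u -> P u) -> (forall w u, f w = Some u -> P u) ->
  forall u, foldr (fun w acc => if acc is Some _ then acc else f w) b l = Some u -> P u.
Proof.
move=> Hb Hf; elim: l => [|w l IH] u //=; first exact: Hb.
case E: (foldr _ _ _) => [v|]; first by move=> [<-]; apply: IH.
by apply: Hf.
Qed.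

Lemma foldr_notnone (b : option V) (f : 'I_n -> option V) (l : seq 'I_n) w :
  w \in l -> f w != None ->
  foldr (fun w acc => if acc is Some _ then acc else f w) b l != None.
Proof.
elim: l => [|w' l IH] //=; rewrite inE => /orP [/eqP <-|Hw] Hf.
  by case: (foldr _ _ _).
by case E: (foldr _ _ _) => [v|] //; move: (IH Hw Hf); rewrite E.
Qed.

Lemma foldr_base (b : option V) (f : 'I_n -> option V) (l : seq 'I_n) :
  b != None -> foldr (fun w acc => if acc is Some _ then acc else f w) b l != None.
Proof. by elim: l => [|w l IH] //= Hb; case E: (foldr _ _ _) => //; move: (IH Hb); rewrite E. Qed.

Lemma decf_props (s : V * ('I_n -> option V)) (l : seq 'I_n) :
  let r := foldr (fun q acc => if s.2 q is Some v then Order.min v acc else acc) s.1 l in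
  (r = s.1 \/ exists q, s.2 q = Some r) /\
  (forall q v, q \in l -> s.2 q = Some v -> (r <= v)%O).
Proof.
elim: l => [|q l [IH1 IH2]] /=; first by split; [left|].
split.
  case E: (s.2 q) => [v|] //; rewrite minEle; case: ifP => _ //.
  by right; exists q; rewrite E.
move=> q' v; rewrite inE => /orP [/eqP ->|Hq] Hs.
  by rewrite Hs ge_min lexx.
case: (s.2 q) => [v'|]; last exact: (IH2 _ _ Hq Hs).
by rewrite ge_min (IH2 _ _ Hq Hs) orbT.
Qed.

Lemma gpow_graph (S : {set graph n}) t :
  (forall G, G \in S -> is_graph G) -> forall H, H \in gpow S t -> is_graph H.
Proof.
move=> HS; elim: t => [|t IH] H /=.
  by rewrite inE => /eqP -> p; rewrite inE eqxx.
case/imset2P => G G' HG HG' -> p; rewrite inE; apply/existsP; exists p => /=.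
by rewrite IH // HS.
Qed.

Lemma subset_card (T : {set 'I_n}) j : j <= #|T| -> exists2 P : {set 'I_n}, P \subset T & #|P| = j.
Proof.
move=> Hj; have [m Hm] : exists m, #|T| = j + m by exists (#|T| - j); rewrite subnKC.
elim: m T Hm {Hj} => [|m IH] T Hm; first by exists T => //; rewrite Hm addn0.
have : 0 < #|T| by rewrite Hm addnS.
rewrite card_gt0 => /set0Pn [x Hx].
have Hc : #|T :\ x| = j + m by rewrite (cardsD1 x T) Hx addnS in Hm; case: Hm.
have [P HP HPc] := IH _ Hc; exists P => //.
by apply: subset_trans HP _; apply: subsetDl.
Qed.

Lemma dom_eqdom (H : graph n) : 0 < n -> is_graph H -> dominating H (eqdom H).
Proof.
move=> n0 HH; rewrite /eqdom; apply: (big_ind (dominating H)) => //.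
- apply/forallP => P; apply/implyP => /eqP HP.
  have -> : P = setT by apply/eqP; rewrite eqEcard subsetT cardsT card_ord HP leqnn.
  apply/eqP/setP => p; rewrite inE; apply/bigcupP; exists p; rewrite ?inE //.
- by move=> a b Ha Hb; rewrite /minn; case: ifP.
Qed.

End Proof.

Theorem theorem7 (n : nat) (d : Order.disp_t) (V : orderType d)
    (S : {set graph n}) (r : nat) :
  0 < n ->
  S != set0 ->
  (forall G, G \in S -> is_graph G) ->
  0 < r ->
  kset_solvable V S (eqdomS (gpow S r)) r.
Proof.
move=> n0 S0 HS r0; exists (floodA n d V) => Gs HGs x.
set s := run (floodA n d V) x Gs.
have Inv : forall t, (forall p, (s t p).1 = x p) /\
    (forall p q u, (s t p).2 q = Some u -> u = x q).
  elim=> [|t [IH1 IH2]] /=.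
    split=> // p q u /=; by case: eqP => // -> [<-].
  split=> // p q u; rewrite /mergeq.
  move: u; apply: (@foldr_some _ _ _ _ _ _ (fun u => u = x q)); first exact: IH2.
  move=> w v; case: ifP => //= _; exact: IH2.
have Know : forall t, exists2 H, H \in gpow S t &
    forall p q, (q, p) \in H -> (s t p).2 q != None.
  elim=> [|t [H HH IH]].
    exists (idgraph n); first by rewrite inE.
    by move=> p q; rewrite inE /= => /eqP ->; rewrite /= eqxx.
  have [G HG HGsub] := HGs t.+1 (ltn0Sn t).
  exists (gprod H G); first exact: imset2_f.
  move=> p q; rewrite inE => /existsP [w /andP [Hqw Hwp]] /=.
  rewrite /mergeq; apply: (@foldr_notnone _ _ _ _ _ _ w); first by rewrite mem_enum.
  have -> : w \in In_ (Gs t.+1) p by rewrite inE; apply: (subsetP HGsub).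
  exact: IH.
set dec := fun p => decision (floodA n d V) x Gs r p.
have Dp : forall p, (exists q, dec p = x q) /\
    forall q v, (s r p).2 q = Some v -> (dec p <= v)%O.
  move=> p; have [D1 D2] := @decf_props n d V (s r p) (enum 'I_n).
  have [I1 I2] := Inv r.
  change (dec p) with (@decf n d V (s r p)); rewrite /decf; split.
    case: D1 => [->|[q Hq]]; [exists p; exact: I1 | exists q; exact: I2 _ _ _ Hq].
  by move=> q v Hv; apply: D2 _ _ _ Hv; rewrite mem_enum.
split; first by move=> p; have [[q Hq] _] := Dp p; exists q.
have [H HH HK] := Know r.
have Hk : eqdom H <= eqdomS (gpow S r) := leq_bigmax_cond _ HH.
have Hdom := @dom_eqdom n H n0 (@gpow_graph n S r HS H HH).
change (size (undup [seq dec p | p <- enum 'I_n]) <= eqdomS (gpow S r)).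
set Ds := undup _.
rewrite leqNgt; apply/negP => Hbig.
have [pm _ Hpm] := @arg_maxP _ _ 'I_n (Ordinal n0) predT dec isT.
set vm := dec pm in Hpm.
set T := [set q | (x q < vm)%O].
have H1 : size Ds <= size (vm :: [seq v <- Ds | (v < vm)%O]).
  apply: uniq_leq_size; first exact: undup_uniq.
  move=> v Hv; rewrite inE mem_filter Hv andbT.
  move: Hv; rewrite mem_undup => /mapP [p _ ->].
  by rewrite -le_eqVlt; apply: Hpm.
have H2 : size [seq v <- Ds | (v < vm)%O] <= #|T|.
  rewrite cardE -(size_map x); apply: uniq_leq_size.
    by apply: filter_uniq; exact: undup_uniq.
  move=> v; rewrite mem_filter => /andP [Hlt].
  rewrite mem_undup => /mapP [p _ Ev].
  have [[q Hq] _] := Dp p.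
  rewrite Ev Hq; apply: map_f; rewrite mem_enum inE -Hq -Ev //.
have HT : eqdom H <= #|T|.
  move: H1 => /= H1; apply: leq_trans Hk _.
  by rewrite -ltnS; apply: leq_trans Hbig _; apply: leq_trans H1 _.
have [P HPT HPc] := @subset_card n T _ HT.
move/forallP: Hdom => /(_ P) /implyP /(_ (introT eqP HPc)) /eqP HO.
have : pm \in OutS H P by rewrite HO inE.
move=> /bigcupP [q HqP]; rewrite inE => Hqp.
have := HK pm q Hqp.
have [_ I2] := Inv r.
case E: ((s r pm).2 q) => [u|] // _.
have Hu := I2 _ _ _ E; subst u.
have [_ D2] := Dp pm.
have := D2 _ _ E.
have : (x q < vm)%O by move: (subsetP HPT q HqP); rewrite inE.
move=> Hlt Hle.
by have := le_lt_trans Hle Hlt; rewrite ltxx.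
Qed.
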